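(* Let $X$ be a Banach space, $F$ a Banach lattice, and let $(T_n)$ be a sequence of limitedly L-weakly compact operators from $X$ to $F$ converging in operator norm to an operator $T:X\to F$. Then $T$ is limitedly L-weakly compact.
   Context: All vector spaces are real and operators are linear and bounded. For a subset $A$ of a Banach lattice $F$, $\mathrm{sol}(A)=\bigcup_{a\in A}[-|a|,|a|]$. A subset $A\subseteq F$ is an Lwc-set if every disjoint sequence in $\mathrm{sol}(A)$ is norm-null. A bounded subset $A$ of a Banach space $X$ is limited if every weak$^\ast$-null sequence in $X'$ converges to $0$ uniformly on $A$. An operator $T:X\to F$ is limitedly L-weakly compact if $T$ maps every limited subset of $X$ onto an Lwc-subset of $F$. *)

(* Defs.v *)
From HB Require Import structures.
From mathcomp Require Import all_boot all_order all_algebra.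
From mathcomp Require Import all_classical all_reals.
From mathcomp Require Import topology normedtype sequences.
Set Implicit Arguments. Unset Strict Implicit. Unset Printing Implicit Defensive.
Import Order.TTheory GRing.Theory Num.Theory.
Import numFieldNormedType.Exports.
Local Open Scope classical_set_scope.
Local Open Scope ring_scope.

Definition bounded_linear (R : realType) (X Y : normedModType R) (T : X -> Y) :=
  linear T /\ continuous T.

(* Elements of the dual X' are bounded linear functionals X -> R. *)
Definition weakstar_null (R : realType) (X : normedModType R)
  (f : nat -> X -> R) :=
  (forall n, bounded_linear (f n)) /\ (forall x, (fun n => f n x) @ \oo --> 0).

Definition limited (R : realType) (X : normedModType R) (A : set X) :=
  (exists M : R, forall a, A a -> `|a| <= M) /\
  (forall f : nat -> X -> R, weakstar_null f ->
     forall eps : R, 0 < eps ->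
       \forall n \near \oo, forall a, A a -> `|f n a| <= eps).

(* Banach lattice structure on a real Banach space F, given by the lattice
   join; the order is x <= y iff x \/ y = y. *)
Record BanachLattice (R : realType) (F : completeNormedModType R) := {
  bl_join : F -> F -> F;
  bl_joinC : forall x y, bl_join x y = bl_join y x;
  bl_joinA : forall x y z, bl_join x (bl_join y z) = bl_join (bl_join x y) z;
  bl_joinxx : forall x, bl_join x x = x;
  (* translation invariance of the order *)
  bl_joinD : forall x y z, bl_join (x + z) (y + z) = bl_join x y + z;
  (* positive homogeneity of the order *)
  bl_joinZ : forall (a : R) x y, 0 <= a ->
     bl_join (a *: x) (a *: y) = a *: bl_join x y;
  (* lattice norm: |x| <= |y| implies ||x|| <= ||y|| *)
  bl_norm_mono : forall x y,
     bl_join (bl_join x (- x)) (bl_join y (- y)) = bl_join y (- y) ->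
     `|x| <= `|y|
}.

Section BL.
Variables (R : realType) (F : completeNormedModType R) (L : BanachLattice F).
Definition bl_le (x y : F) : Prop := bl_join L x y = y.
Definition bl_meet (x y : F) : F := - bl_join L (- x) (- y).
Definition bl_abs (x : F) : F := bl_join L x (- x).
Definition bl_sol (A : set F) : set F :=
  [set y | exists2 a, A a & bl_le (bl_abs y) (bl_abs a)].
Definition bl_disjoint_seq (u : nat -> F) : Prop :=
  forall n m, n <> m -> bl_meet (bl_abs (u n)) (bl_abs (u m)) = 0.
Definition Lwc_set (A : set F) : Prop :=
  forall u : nat -> F, (forall n, bl_sol A (u n)) -> bl_disjoint_seq u ->
    (fun n => `|u n|) @ \oo --> 0.
End BL.

Definition limitedly_Lwc (R : realType) (X : normedModType R)
  (F : completeNormedModType R) (L : BanachLattice F) (T : X -> F) :=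
  forall A : set X, limited A -> Lwc_set L (T @` A).

(* Operator-norm convergence T_n -> T: for every eps > 0, eventually
   ||T_n - T|| <= eps, i.e. ||T_n x - T x|| <= eps ||x|| for all x. *)
Definition opnorm_cvg (R : realType) (X Y : normedModType R)
  (Tn : nat -> X -> Y) (T : X -> Y) :=
  forall eps : R, 0 < eps ->
    \forall n \near \oo, forall x, `|Tn n x - T x| <= eps * `|x|.

(* Main.v *)
Require Import Defs.
From mathcomp Require Import all_boot all_order all_algebra.
From mathcomp Require Import all_classical all_reals.
From mathcomp Require Import topology normedtype sequences.
Set Implicit Arguments. Unset Strict Implicit. Unset Printing Implicit Defensive.
Import Order.TTheory GRing.Theory Num.Theory.
Import numFieldNormedType.Exports.
Local Open Scope classical_set_scope.
Local Open Scope ring_scope.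

Lemma le_refl' {R : realType} {F : completeNormedModType R} (L : BanachLattice F) (x : F) :
  bl_le L x x.
Proof. exact: bl_joinxx. Qed.

Lemma le_trans' {R : realType} {F : completeNormedModType R} (L : BanachLattice F) (x y z : F) :
  bl_le L x y -> bl_le L y z -> bl_le L x z.
Proof. rewrite /bl_le => h1 h2; by rewrite -h2 bl_joinA h1. Qed.

Lemma le_anti' {R : realType} {F : completeNormedModType R} (L : BanachLattice F) (x y : F) :
  bl_le L x y -> bl_le L y x -> x = y.
Proof. rewrite /bl_le => h1 h2; by rewrite -h1 bl_joinC h2. Qed.

Lemma join_l' {R : realType} {F : completeNormedModType R} (L : BanachLattice F) (x y : F) :
  bl_le L x (bl_join L x y).
Proof. by rewrite /bl_le bl_joinA bl_joinxx. Qed.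

Lemma join_r' {R : realType} {F : completeNormedModType R} (L : BanachLattice F) (x y : F) :
  bl_le L y (bl_join L x y).
Proof. rewrite bl_joinC; exact: join_l'. Qed.

Lemma join_lub' {R : realType} {F : completeNormedModType R} (L : BanachLattice F) (x y z : F) :
  bl_le L x z -> bl_le L y z -> bl_le L (bl_join L x y) z.
Proof. rewrite /bl_le => h1 h2; by rewrite -bl_joinA h2 h1. Qed.

Lemma le_add' {R : realType} {F : completeNormedModType R} (L : BanachLattice F) (x y z : F) :
  bl_le L x y -> bl_le L (x + z) (y + z).
Proof. rewrite /bl_le => h; by rewrite bl_joinD h. Qed.

Lemma le_add2' {R : realType} {F : completeNormedModType R} (L : BanachLattice F) (x y z t : F) :
  bl_le L x y -> bl_le L z t -> bl_le L (x + z) (y + t).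
Proof.
move=> h1 h2; apply: (le_trans' (le_add' z h1)).
rewrite (addrC y z) (addrC y t); exact: le_add'.
Qed.

Lemma le_opp' {R : realType} {F : completeNormedModType R} (L : BanachLattice F) (x y : F) :
  bl_le L x y -> bl_le L (- y) (- x).
Proof.
move=> h; have := le_add' (- x - y) h.
by rewrite addrA subrr add0r addrCA subrr addr0.
Qed.

Lemma meet_l' {R : realType} {F : completeNormedModType R} (L : BanachLattice F) (x y : F) :
  bl_le L (bl_meet L x y) x.
Proof. have := le_opp' (join_l' L (- x) (- y)); by rewrite opprK. Qed.

Lemma meet_r' {R : realType} {F : completeNormedModType R} (L : BanachLattice F) (x y : F) :
  bl_le L (bl_meet L x y) y.
Proof. have := le_opp' (join_r' L (- x) (- y)); by rewrite opprK. Qed.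

Lemma meet_glb' {R : realType} {F : completeNormedModType R} (L : BanachLattice F) (x y z : F) :
  bl_le L z x -> bl_le L z y -> bl_le L z (bl_meet L x y).
Proof.
move=> h1 h2; have := le_opp' (join_lub' (le_opp' h1) (le_opp' h2)).
by rewrite opprK.
Qed.

Lemma abs_ge' {R : realType} {F : completeNormedModType R} (L : BanachLattice F) (x : F) :
  bl_le L x (bl_abs L x).
Proof. exact: join_l'. Qed.

Lemma abs_geN' {R : realType} {F : completeNormedModType R} (L : BanachLattice F) (x : F) :
  bl_le L (- x) (bl_abs L x).
Proof. exact: join_r'. Qed.

Lemma abs_ge0' {R : realType} {F : completeNormedModType R} (L : BanachLattice F) (x : F) :
  bl_le L 0 (bl_abs L x).
Proof.
have h : bl_le L 0 (bl_abs L x + bl_abs L x).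
  by rewrite -(subrr x); apply: le_add2'; [exact: abs_ge'|exact: abs_geN'].
have e : bl_abs L x + bl_abs L x = (2:R) *: bl_abs L x.
  by rewrite scaler_nat mulr2n.
rewrite e in h.
have := @bl_joinZ R F L (2^-1) 0 ((2:R) *: bl_abs L x) _.
rewrite h scaler0 scalerA mulVf ?scale1r.
- by rewrite /bl_le => ->; rewrite // invr_ge0 ler0n.
- by rewrite pnatr_eq0.
Qed.

Lemma abs_pos' {R : realType} {F : completeNormedModType R} (L : BanachLattice F) (z : F) :
  bl_le L 0 z -> bl_abs L z = z.
Proof.
move=> h; have h2 : bl_le L (- z) z.
  apply: (le_trans' _ h); have := le_opp' h; by rewrite oppr0.
by rewrite /bl_abs bl_joinC.
Qed.

Lemma abs_abs' {R : realType} {F : completeNormedModType R} (L : BanachLattice F) (x : F) :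
  bl_abs L (bl_abs L x) = bl_abs L x.
Proof. exact/abs_pos'/abs_ge0'. Qed.

Lemma triangle' {R : realType} {F : completeNormedModType R} (L : BanachLattice F) (x y : F) :
  bl_le L (bl_abs L (x + y)) (bl_abs L x + bl_abs L y).
Proof.
apply: join_lub'; first by apply: le_add2'; exact: abs_ge'.
rewrite opprD; apply: le_add2'; exact: abs_geN'.
Qed.

Lemma norm_mono' {R : realType} {F : completeNormedModType R} (L : BanachLattice F) (x y : F) :
  bl_le L (bl_abs L x) (bl_abs L y) -> `|x| <= `|y|.
Proof. exact: bl_norm_mono. Qed.

Lemma norm_abs' {R : realType} {F : completeNormedModType R} (L : BanachLattice F) (x : F) :
  `|bl_abs L x| = `|x|.
Proof.
apply/eqP; rewrite eq_le; apply/andP; split; apply: (norm_mono' (L := L));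
  rewrite abs_abs'; exact: le_refl'.
Qed.

Lemma key' {R : realType} {F : completeNormedModType R} (L : BanachLattice F) (u p v : F) :
  bl_le L (bl_abs L u) (bl_abs L p) ->
  [/\ bl_le L 0 (bl_meet L (bl_abs L u) (bl_abs L v)),
      bl_le L (bl_meet L (bl_abs L u) (bl_abs L v)) (bl_abs L u),
      bl_le L (bl_meet L (bl_abs L u) (bl_abs L v)) (bl_abs L v) &
      `|u| <= `|bl_meet L (bl_abs L u) (bl_abs L v)| + `|p - v|].
Proof.
move=> hp; set w := bl_meet L _ _.
have w0 : bl_le L 0 w by apply: meet_glb'; exact: abs_ge0'.
have wu : bl_le L w (bl_abs L u) by exact: meet_l'.
split => //; first exact: meet_r'.
have d0 : bl_le L 0 (bl_abs L u - w).
  by rewrite -(subrr w); apply: le_add'.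
have hd : bl_le L (bl_abs L (bl_abs L u - w)) (bl_abs L (p - v)).
  rewrite abs_pos' // /w /bl_meet opprK.
  rewrite addrC -[X in bl_le L X _](@bl_joinD R F L) addNr.
  apply: join_lub'; first exact: abs_ge0'.
  rewrite addrC; apply: (le_trans' (y := bl_abs L p - bl_abs L v)).
    exact: le_add'.
  have := le_add' (- bl_abs L v) (triangle' L (p - v) v).
  by rewrite subrK addrK.
rewrite -(norm_abs' L u) -{1}(subrK w (bl_abs L u)) addrC.
apply: (le_trans (ler_normD _ _)); rewrite lerD2l.
exact: (norm_mono' hd).
Qed.

Lemma disj' {R : realType} {F : completeNormedModType R} (L : BanachLattice F) (a b w1 w2 : F) :
  bl_meet L a b = 0 -> bl_le L 0 w1 -> bl_le L 0 w2 -> bl_le L w1 a -> bl_le L w2 b ->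
  bl_meet L (bl_abs L w1) (bl_abs L w2) = 0.
Proof.
move=> hab h1 h2 h1a h2b; rewrite !abs_pos' //.
apply: le_anti'; last exact: meet_glb'.
rewrite -hab; apply: meet_glb'.
  exact: le_trans' (meet_l' _ _ _) h1a.
exact: le_trans' (meet_r' _ _ _) h2b.
Qed.

Theorem proposition3p2 (R : realType) (X : completeNormedModType R)
  (F : completeNormedModType R) (L : BanachLattice F)
  (Tn : nat -> X -> F) (T : X -> F) :
  (forall n, bounded_linear (Tn n)) ->
  (forall n, limitedly_Lwc L (Tn n)) ->
  bounded_linear T ->
  opnorm_cvg Tn T ->
  limitedly_Lwc L T.
Proof.
move=> _ HTn _ Hcv A Alim u Hu Hdisj.
have : forall k, exists x, A x /\ bl_le L (bl_abs L (u k)) (bl_abs L (T x)).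
  by move=> k; case: (Hu k) => _ [x Ax <-] h; exists x.
move/choice => [a Ha].
have Alim' := Alim; case: Alim' => [[M HM] _].
set M' := `|M| + 1.
have M'0 : 0 < M' by rewrite /M' ltr_pwDr // normr_ge0.
have aM k : `|a k| <= M'.
  apply: (le_trans (HM _ (Ha k).1)); rewrite /M'.
  apply: (le_trans (ler_norm M)); by rewrite lerDl.
apply/cvgrPdist_le => eps eps0.
have e2 : 0 < eps / 2 / M' by rewrite !divr_gt0.
case: (Hcv _ e2) => N _ HN.
have HNN := HN N (leqnn N).
set w := fun k => bl_meet L (bl_abs L (u k)) (bl_abs L (Tn N (a k))).
have Hk k := key' (Tn N (a k)) (Ha k).2.
have Hw : (fun k => `|w k|) @ \oo --> 0.
  apply: (HTn N A Alim w).
    move=> k; have [h0 hu hv _] := Hk k.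
    exists (Tn N (a k)); first by exists (a k) => //; exact: (Ha k).1.
    by rewrite /w abs_pos'.
  move=> k m km; have [h0 hu _ _] := Hk k; have [h0' hu' _ _] := Hk m.
  exact: disj' (Hdisj k m km) h0 h0' hu hu'.
move/cvgrPdist_le : Hw => /(_ (eps / 2)) Hw.
have := Hw (divr_gt0 eps0 (ltr0Sn _ _)); apply: filterS => k.
rewrite !sub0r !normrN !normr_id => hk.
have [_ _ _ hu] := Hk k.
apply: (le_trans hu); rewrite [eps]splitr; apply: lerD; first by rewrite /bl_meet normrN.
rewrite distrC; apply: (le_trans (HNN (a k))).
apply: (le_trans (ler_wpM2l (ltW e2) (aM k))).
by rewrite divfK // gt_eqF.
Qed.
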